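(* For any positive integers $n, q$ there exist an arena $\mathcal{A}$ (over a finite set of colors) with $n+3$ nodes, a node $u$ of $\mathcal{A}$, and a $q$-state strategy $S_1$ of Player 0 in $\mathcal{A}$ such that for every chromatic $Q$-state strategy $S_2$ of Player 0 in $\mathcal{A}$: if $\mathsf{col}(S_2,u)\subseteq\mathsf{col}(S_1,u)$, then $Q\ge q^n$.
   Context: An arena over a set of colors $C$ is a tuple $\mathcal{A} = \langle V, V_0, V_1, E\rangle$ of finite sets with $V = V_0 \sqcup V_1$, $E \subseteq V \times C \times V$, and every node having at least one outgoing edge; for $e=(s,c,t)$ write $\mathsf{source}(e)=s$, $\mathsf{col}(e)=c$, $\mathsf{target}(e)=t$. A path is a nonempty finite or infinite sequence of edges $e_1e_2\ldots$ with $\mathsf{target}(e_i)=\mathsf{source}(e_{i+1})$; for each node $v$ there is also a $0$-length path $\lambda_v$ with source and target $v$. $\mathsf{col}$ extends letterwise to sequences of edges. A strategy of Player 0 is a function $S$ assigning to each finite path $p$ with $\mathsf{target}(p)\in V_0$ an edge $S(p)$ with $\mathsf{source}(S(p))=\mathsf{target}(p)$. A path $p=e_1e_2\ldots$ is consistent with $S$ if (when $\mathsf{source}(p)\in V_0$) $e_1=S(\lambda_{\mathsf{source}(p)})$ and for each $1\le i<|p|$ with $\mathsf{target}(e_i)\in V_0$ we have $e_{i+1}=S(e_1\ldots e_i)$. For $v\in V$, $\mathsf{col}(S,v)\subseteq C^\omega$ is the set of $\mathsf{col}(p)$ over all infinite paths $p$ from $v$ consistent with $S$. A memory structure is $\mathcal{M}=\langle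 M, m_{init},\delta\rangle$ with $M$ finite, $m_{init}\in M$, $\delta: M\times E\to M$ (extended to finite edge sequences in the usual way). $S$ is an $\mathcal{M}$-strategy if for all finite paths $p_1,p_2$ with $\mathsf{target}(p_1)=\mathsf{target}(p_2)\in V_0$, $\delta(m_{init},p_1)=\delta(m_{init},p_2)$ implies $S(p_1)=S(p_2)$. $\mathcal{M}$ is chromatic if there is $\sigma: M\times C\to M$ with $\delta(m,e)=\sigma(m,\mathsf{col}(e))$ for all $m,e$. A (chromatic) $q$-state strategy is an $\mathcal{M}$-strategy for some (chromatic) memory structure $\mathcal{M}$ with $|M|=q$. *)

(* Defs.v *)
From mathcomp Require Import all_boot.
Set Implicit Arguments. Unset Strict Implicit. Unset Printing Implicit Defensive.

Section Arena.
Variables (V C : finType).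

Definition edge := (V * C * V)%type.
Definition source (e : edge) : V := e.1.1.
Definition ecol (e : edge) : C := e.1.2.
Definition target (e : edge) : V := e.2.

(* An arena <V, V0, V1, E>: V1 is the complement of V0;
   every node has at least one outgoing edge. *)
Definition is_arena (V0 : {set V}) (E : {set edge}) : Prop :=
  forall v : V, exists2 e, e \in E & source e = v.

(* A finite path is encoded as (v, s): its source node v and its edge list s
   (s = [::] encodes the 0-length path lambda_v). *)
Fixpoint is_fpath (E : {set edge}) (v : V) (s : seq edge) : Prop :=
  match s with
  | [::] => True
  | e :: s' => e \in E /\ source e = v /\ is_fpath E (target e) s'
  end.

Fixpoint ftarget (v : V) (s : seq edge) : V :=
  match s with
  | [::] => v
  | e :: s' => ftarget (target e) s'
  end.

Definition strat := V -> seq edge -> edge.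

Definition is_strategy (V0 : {set V}) (E : {set edge}) (S : strat) : Prop :=
  forall v s, is_fpath E v s -> ftarget v s \in V0 ->
    S v s \in E /\ source (S v s) = ftarget v s.

Definition is_ipath (E : {set edge}) (v : V) (p : nat -> edge) : Prop :=
  (forall i, p i \in E) /\ source (p 0) = v /\
  (forall i, target (p i) = source (p i.+1)).

Definition consistent (V0 : {set V}) (S : strat) (v : V) (p : nat -> edge) : Prop :=
  (v \in V0 -> p 0 = S v [::]) /\
  (forall i, target (p i) \in V0 -> p i.+1 = S v (mkseq p i.+1)).

Definition in_col (V0 : {set V}) (E : {set edge}) (S : strat) (v : V)
  (w : nat -> C) : Prop :=
  exists p, is_ipath E v p /\ consistent V0 S v p /\ forall i, w i = ecol (p i).

Definition delta_seq (M : Type) (delta : M -> edge -> M) (m : M) (s : seq edge) : M :=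
  foldl delta m s.

Definition is_M_strategy (V0 : {set V}) (E : {set edge}) (M : Type)
  (minit : M) (delta : M -> edge -> M) (S : strat) : Prop :=
  forall v1 s1 v2 s2, is_fpath E v1 s1 -> is_fpath E v2 s2 ->
    ftarget v1 s1 = ftarget v2 s2 -> ftarget v1 s1 \in V0 ->
    delta_seq delta minit s1 = delta_seq delta minit s2 -> S v1 s1 = S v2 s2.

Definition chromatic (E : {set edge}) (M : Type) (delta : M -> edge -> M) : Prop :=
  exists sigma : M -> C -> M, forall m e, e \in E -> delta m e = sigma m (ecol e).

Definition q_state_strategy (V0 : {set V}) (E : {set edge}) (S : strat) (q : nat) : Prop :=
  exists (M : finType) (minit : M) (delta : M -> edge -> M),
    #|M| = q /\ is_M_strategy V0 E minit delta S.

Definition chromatic_q_state_strategy (V0 : {set V}) (E : {set edge}) (S : strat)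
  (q : nat) : Prop :=
  exists (M : finType) (minit : M) (delta : M -> edge -> M),
    #|M| = q /\ chromatic E delta /\ is_M_strategy V0 E minit delta S.

End Arena.

(* Main.v *)
Require Import Defs.
From mathcomp Require Import all_boot.
Set Implicit Arguments. Unset Strict Implicit. Unset Printing Implicit Defensive.

Section Constr.
Variables (n q : nat).
Definition VV : finType := option (option (option 'I_n)).
Definition CC : finType := (({ffun 'I_n -> 'I_q} + 'I_n) + 'I_q)%type.
Definition nu : VV := None.
Definition nw : VV := Some None.
Definition nz : VV := Some (Some None).
Definition nv (i : 'I_n) : VV := Some (Some (Some i)).

Definition edge_ok (e : edge VV CC) : bool :=
  match e with
  | ((None, inl (inl _)), Some (Some (Some _))) => true
  | ((Some (Some (Some i)), inl (inr j)), Some None) => i == j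
  | ((Some None, inr _), Some (Some None)) => true
  | ((Some (Some None), inr _), Some (Some None)) => true
  | _ => false
  end.

Definition EE : {set edge VV CC} := [set e | edge_ok e].
Definition V0 : {set VV} := [set nw].

Definition d1 (m : 'I_q) (e : edge VV CC) : 'I_q :=
  match e with
  | ((None, inl (inl x)), Some (Some (Some i))) => x i
  | _ => m
  end.

Definition S1 (m0 : 'I_q) : strat VV CC :=
  fun v s => ((nw, inr (delta_seq d1 m0 s)), nz).

Definition PP (x : {ffun 'I_n -> 'I_q}) (i : 'I_n) : seq (edge VV CC) :=
  [:: ((nu, inl (inl x)), nv i); ((nv i, inl (inr i)), nw)].
End Constr.

Lemma inv_w n q (e : edge (VV n) (CC n q)) :
  e \in EE n q -> source e = nw n -> exists c, e = ((nw n, inr c), nz n).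
Proof.
rewrite inE; case: e => [[s c] t] /= + hs; rewrite /source /= in hs; subst s.
by case: c => [[x|j]|c] //; case: t => [[[k|]|]|] // _; exists c.
Qed.

Lemma inv_u n q (e : edge (VV n) (CC n q)) x :
  e \in EE n q -> source e = nu n -> ecol e = inl (inl x) ->
  exists j, e = ((nu n, inl (inl x)), nv j).
Proof.
rewrite inE; case: e => [[s c] t] /= + hs hc; rewrite /source /ecol /= in hs hc; subst s c.
by case: t => [[[k|]|]|] // _; exists k.
Qed.

Lemma inv_v n q (e : edge (VV n) (CC n q)) j i :
  e \in EE n q -> source e = nv j -> ecol e = inl (inr i) ->
  j = i /\ e = ((nv j, inl (inr i)), nw n).
Proof.
rewrite inE; case: e => [[s c] t] /= + hs hc; rewrite /source /ecol /= in hs hc; subst s c.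
by case: t => [[[k|]|]|] // /eqP ->.
Qed.

Theorem theorem3 (n q : nat) : 0 < n -> 0 < q ->
  exists (V C : finType) (V0 : {set V}) (E : {set edge V C}),
    #|V| = n + 3 /\ is_arena V0 E /\
    exists (u : V) (S1 : strat V C),
      is_strategy V0 E S1 /\ q_state_strategy V0 E S1 q /\
      forall (Q : nat) (S2 : strat V C),
        is_strategy V0 E S2 -> chromatic_q_state_strategy V0 E S2 Q ->
        (forall w, in_col V0 E S2 u w -> in_col V0 E S1 u w) ->
        q ^ n <= Q.
Proof.
move=> hn hq.
pose i0 : 'I_n := Ordinal hn.
pose c0 : 'I_q := Ordinal hq.
exists (VV n), (CC n q), (V0 n), (EE n q).
split.
  by rewrite /VV !card_option card_ord addn3.
split.
  case=> [[[i|]|]|].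
  - by exists ((nv i, inl (inr i)), nw n); rewrite ?inE //= eqxx.
  - by exists ((nz n, inr c0), nz n); rewrite ?inE.
  - by exists ((nw n, inr c0), nz n); rewrite ?inE.
  - by exists ((nu n, inl (inl [ffun=> c0])), nv i0); rewrite ?inE.
exists (nu n), (S1 c0).
split.
  move=> v s _; rewrite inE => /eqP ->; by rewrite inE.
split.
  exists 'I_q, c0, (@d1 n q); split; first by rewrite card_ord.
  by move=> v1 s1 v2 s2 _ _ _ _; rewrite /S1 => ->.
move=> Q S2 hS2 [M [minit [delta [hM [[sigma hsig] hMS]]]]] hcol.
have key : forall x i, ecol (S2 (nu n) (PP x i)) = inr (x i).
  move=> x i.
  have hfp : is_fpath (EE n q) (nu n) (PP x i).
    by rewrite /= !inE /= eqxx.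
  have [he2 hs2] := hS2 _ _ hfp (set11 _).
  have [c {}he2] := inv_w he2 hs2.
  pose zl : edge (VV n) (CC n q) := ((nz n, inr c0), nz n).
  pose p k := nth zl [:: ((nu n, inl (inl x)), nv i); ((nv i, inl (inr i)), nw n);
                        S2 (nu n) (PP x i)] k.
  have Hin : in_col (V0 n) (EE n q) S2 (nu n) (fun k => ecol (p k)).
    exists p; split; [split; [|split]|split; [split|]].
    - case=> [|[|[|k]]]; rewrite /p /= ?nth_nil ?he2 !inE //= eqxx.
    - by [].
    - by case=> [|[|[|k]]]; rewrite /p /= ?nth_nil ?he2.
    - by rewrite inE.
    - by case=> [|[|[|k]]]; rewrite /p /= ?nth_nil ?he2 inE.
    - by [].
  have [p' [[hE [h0 hch]] [[_ hcons] hc]]] := hcol _ Hin.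
  have [j hp0] := inv_u (hE 0) h0 (esym (hc 0)).
  have hs1 : source (p' 1) = nv j by rewrite -hch hp0.
  have [hji hp1] := inv_v (hE 1) hs1 (esym (hc 1)).
  subst j.
  have hp2 := hcons 1.
  rewrite hp1 inE eqxx in hp2.
  have := hc 2.
  rewrite /p /= => ->.
  rewrite (hp2 isT) /mkseq /= hp0 hp1 /S1 /=.
  by [].
pose F x := sigma minit (inl (inl x)).
have Finj : injective F.
  move=> x y hF; apply/ffunP => i.
  have fp : forall z, is_fpath (EE n q) (nu n) (PP z i).
    by move=> z; rewrite /= !inE /= eqxx.
  have hmem : forall z, delta_seq delta minit (PP z i) = sigma (F z) (inl (inr i)).
    by move=> z; rewrite /delta_seq /= !hsig // !inE //= eqxx.
  have h := hMS (nu n) (PP x i) (nu n) (PP y i) (fp x) (fp y) erefl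
    (set11 _) (ltac:(by rewrite !hmem hF)).
  by have := key x i; rewrite h key => -[].
have := leq_card F Finj; by rewrite card_ffun !card_ord hM.
Qed.
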